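(* Let $X_n(d_1,\dots,d_r)\subset\mathbb{C}P^{n+r}$ be a complete intersection with $r>1$, $d_1,\dots,d_r>1$ and $c_1=n+r+1-\sum_{i=1}^r d_i<0$. For $1\leqslant j\leqslant r$ set $c_1^{(n,\hat j)}=n+(r-1)+1-\sum_{i=1}^r d_i+d_j$. If $c_1^{(n,\hat j)}\geqslant 0$ for every $1\leqslant j\leqslant r$, then $(-1)^n{\rm Td}(X_n(d_1,\dots,d_r))\geqslant n+r$.
   Context: A complete intersection $X_n(d_1,\dots,d_r)\subset\mathbb{C}P^{n+r}$ is a compact complex $n$-dimensional manifold given as the transversal intersection of $r$ nonsingular hypersurfaces of degrees $d_1,\dots,d_r$. The Todd genus of a compact complex $n$-manifold $M$ with formal Chern roots $x_1,\dots,x_n$ is ${\rm Td}(M)=\big(\prod_i\frac{x_i}{1-e^{-x_i}}\big)[M]$. *)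

(* Defs.v *)
From mathcomp Require Import all_boot all_order all_algebra.
Unset Printing Implicit Defensive.
Import Order.TTheory GRing.Theory Num.Theory.
Local Open Scope ring_scope.

(* Truncation to degree <= n of the power series (1 - e^{-a x}) / x
   = sum_{k>=0} -(-a)^(k+1) x^k / (k+1)! . *)
Definition gser (a : rat) (n : nat) : {poly rat} :=
  \poly_(k < n.+1) (- (- a) ^+ k.+1 / (k.+1)`!%:R).

(* Truncation (exact up to degree n) of the Todd power series
   x / (1 - e^{-x}) = 1 / gser 1 = sum_k (1 - gser 1)^k. *)
Definition toddser (n : nat) : {poly rat} :=
  \sum_(k < n.+1) (1 - gser 1 n) ^+ k.

(* With x the hyperplane class, TX (+) N = TCP^{n+r}|_X, whose Chern roots are
   x (n+r+1 times), and N has Chern roots d_i x.  Hence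
     Td(TX) = (x/(1-e^{-x}))^{n+r+1} * prod_i (1-e^{-d_i x})/(d_i x),
   and evaluation on [X] of a class p(x) is (prod_i d_i) * [x^n] p. *)
Definition Todd_CI (n r : nat) (d : 'I_r -> nat) : rat :=
  (\prod_(i < r) (d i)%:R) *
  (toddser n ^+ (n + r + 1) *
   \prod_(i < r) ((d i)%:R^-1 *: gser (d i)%:R n))`_n.

Definition c1_CI (n r : nat) (d : 'I_r -> nat) : int :=
  (n + r + 1)%:Z - (\sum_(i < r) d i)%:Z.

Definition c1_hat (n r : nat) (d : 'I_r -> nat) (j : 'I_r) : int :=
  (n + (r - 1) + 1)%:Z - (\sum_(i < r) d i)%:Z + (d j)%:Z.

(* Main.v *)
Require Import Defs.
From mathcomp Require Import all_boot all_order all_algebra.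
From mathcomp Require Import ring zify lra.
Import Order.TTheory GRing.Theory Num.Theory.
Local Open Scope ring_scope.

Definition eqm (m : nat) (p q : {poly rat}) := forall i, (i < m)%N -> p`_i = q`_i.

Lemma eqm_refl m p : eqm m p p. Proof. by []. Qed.
Lemma eqm_sym m p q : eqm m p q -> eqm m q p.
Proof. by move=> H i Hi; rewrite H. Qed.
Lemma eqm_trans m p q s : eqm m p q -> eqm m q s -> eqm m p s.
Proof. by move=> H1 H2 i Hi; rewrite H1 // H2. Qed.
Lemma eqm_eq m p q : p = q -> eqm m p q.
Proof. by move=> ->. Qed.
Lemma eqm_le m k p q : (k <= m)%N -> eqm m p q -> eqm k p q.
Proof. by move=> Hk H i Hi; apply: H; apply: leq_trans Hk. Qed.
Lemma eqmD m p q p' q' : eqm m p p' -> eqm m q q' -> eqm m (p + q) (p' + q').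
Proof. by move=> H1 H2 i Hi; rewrite !coefD H1 // H2. Qed.
Lemma eqmN m p p' : eqm m p p' -> eqm m (- p) (- p').
Proof. by move=> H1 i Hi; rewrite !coefN H1. Qed.
Lemma eqmB m p q p' q' : eqm m p p' -> eqm m q q' -> eqm m (p - q) (p' - q').
Proof. by move=> H1 H2; apply: eqmD => //; apply: eqmN. Qed.
Lemma eqmMn m p p' k : eqm m p p' -> eqm m (p *+ k) (p' *+ k).
Proof. by move=> H1 i Hi; rewrite !coefMn H1. Qed.
Lemma eqmM m p q p' q' : eqm m p p' -> eqm m q q' -> eqm m (p * q) (p' * q').
Proof.
move=> H1 H2 i Hi; rewrite !coefM; apply: eq_bigr => j _.
rewrite H1; last by apply: leq_ltn_trans Hi; rewrite -ltnS.
by rewrite H2 // (leq_ltn_trans _ Hi) // leq_subr.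
Qed.
Lemma eqmX m p p' k : eqm m p p' -> eqm m (p ^+ k) (p' ^+ k).
Proof. by move=> H; elim: k => [|k IH]; rewrite ?expr0 // !exprS; apply: eqmM. Qed.
Lemma eqm_prod m (I : finType) (P : pred I) (F G : I -> {poly rat}) :
  (forall i, eqm m (F i) (G i)) -> eqm m (\prod_(i | P i) F i) (\prod_(i | P i) G i).
Proof.
move=> H; elim/big_rec2: _ => //; move=> i x y _ Hxy; exact: eqmM.
Qed.
Lemma eqm_zeroM m m' p q : eqm m p 0 -> eqm m' q 0 -> eqm (m + m') (p * q) 0.
Proof.
move=> H1 H2 i Hi; rewrite coefM coef0 big1 // => j _.
case: (ltnP j m) => Hj; first by rewrite H1 // ?coef0 ?mul0r.
rewrite H2 ?coef0 ?mulr0 //; have := ltn_ord j; lia.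
Qed.
Lemma eqm_zeroX p k : eqm 1 p 0 -> eqm k (p ^+ k) 0.
Proof.
move=> H; elim: k => [|k IH]; first by move=> i.
by rewrite exprS -add1n; apply: eqm_zeroM.
Qed.
Lemma eqm_deriv m p q : eqm m.+1 p q -> eqm m p^`() q^`().
Proof. by move=> H i Hi; rewrite !coef_deriv H. Qed.
Lemma eqm_X m p q : eqm m p q -> eqm m.+1 ('X * p) ('X * q).
Proof. by move=> H [|i] Hi; rewrite !coefXM //= H. Qed.
Arguments eqm_sym {m p q}.
Arguments eqm_trans {m p q s}.
Arguments eqm_eq {m p q}.
Arguments eqm_deriv {m p q}.
Arguments eqm_X {m p q}.

Lemma coef_gser a n k : (gser a n)`_k = if (k < n.+1)%N then - (-a)^+k.+1 / (k.+1)`!%:R else 0.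
Proof. by rewrite /gser coef_poly. Qed.

Lemma sum_geo (h : {poly rat}) k : (\sum_(i < k) h^+i) * (1 - h) = 1 - h^+k.
Proof.
elim: k => [|k IH]; first by rewrite big_ord0 mul0r expr0 subrr.
by rewrite big_ord_recr /= mulrDl IH exprS; ring.
Qed.

Lemma gser0 a n : (gser a n)`_0 = a.
Proof. by rewrite coef_gser /= expr1 opprK divr1. Qed.

Lemma toddser_inv m : eqm m.+1 (toddser m * gser 1 m) 1.
Proof.
have -> : toddser m * gser 1 m = 1 - (1 - gser 1 m) ^+ m.+1.
  by rewrite -sum_geo /toddser; congr (_ * _); ring.
apply: (@eqm_trans _ _ (1 - 0)); last by rewrite subr0.
apply: eqmB => //; apply: eqm_zeroX => -[|//] _.
by rewrite coefB coef1 gser0 subrr coef0.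
Qed.

Lemma eqm_gser a n K : (n <= K)%N -> eqm n.+1 (gser a n) (gser a K).
Proof.
move=> HK i Hi; rewrite !coef_gser Hi.
by rewrite (leq_trans Hi) // ltnS.
Qed.

Lemma inv_uniq m T1 T2 g1 g2 :
  eqm m (T1 * g1) 1 -> eqm m (T2 * g2) 1 -> eqm m g1 g2 -> eqm m T1 T2.
Proof.
move=> H1 H2 H3.
apply: (@eqm_trans _ _ (T1 * (T2 * g2))).
  by rewrite -{1}(mulr1 T1); apply: eqmM => //; apply: eqm_sym.
apply: (@eqm_trans _ _ (T1 * (T2 * g1))).
  by apply: eqmM => //; apply: eqmM => //; apply: eqm_sym.
have -> : T1 * (T2 * g1) = (T1 * g1) * T2 by ring.
by rewrite -{2}(mul1r T2); apply: eqmM.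
Qed.

Lemma todd_trunc n K : (n <= K)%N -> eqm n.+1 (toddser n) (toddser K).
Proof.
move=> HK; apply: (@inv_uniq _ _ _ _ _ (toddser_inv n)).
  by apply: eqm_le (toddser_inv K); rewrite ltnS.
exact: eqm_gser.
Qed.

Lemma coef_ex a K i : (i <= K.+1)%N -> (1 - 'X * gser a K)`_i = (-a)^+i / i`!%:R.
Proof.
case: i => [|i] Hi; first by rewrite coefB coef1 coefXM /= subr0 expr0 fact0 divr1.
by rewrite coefB coef1 coefXM /= coef_gser Hi sub0r mulNr opprK.
Qed.

Lemma fact_neq0 i : (i`!%:R : rat) != 0.
Proof. by rewrite pnatr_eq0 -lt0n fact_gt0. Qed.
Lemma natS_neq0 i : (i.+1%:R : rat) != 0.
Proof. by rewrite pnatr_eq0. Qed.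

Lemma ode (p : {poly rat}) c m :
  (forall i, (i < m)%N -> p^`()`_i = c * p`_i) -> p`_0 = 1 ->
  forall i, (i <= m)%N -> p`_i = c^+i / i`!%:R.
Proof.
move=> H H0; elim=> [|i IH] Hi; first by rewrite H0 expr0 fact0 divr1.
have := H i Hi; rewrite coef_deriv IH ?(ltnW Hi) // => Hx.
rewrite -[p`_i.+1 *+ _]mulr_natr in Hx.
have -> : p`_i.+1 = (c * (c ^+ i / i`!%:R)) / i.+1%:R.
  by rewrite -Hx mulfK //; apply: natS_neq0.
rewrite exprS factS natrM; field.
by rewrite fact_neq0 addrC natr1 natS_neq0.
Qed.

Lemma coef0X (p : {poly rat}) k : (p^+k)`_0 = p`_0 ^+ k.
Proof. by elim: k => [|k IH]; rewrite ?expr0 ?coef1 // !exprS coef0M IH. Qed.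

Lemma e_deriv K : eqm K.+1 (1 - 'X * gser 1 K)^`() (- (1 - 'X * gser 1 K)).
Proof.
move=> i Hi; rewrite coef_deriv coefN !coef_ex // ?(ltnW Hi) //.
rewrite -[_ *+ i.+1]mulr_natr exprS factS natrM; field.
by rewrite fact_neq0 addrC natr1 natS_neq0.
Qed.

Lemma exd d K : eqm K.+2 (1 - 'X * gser d%:R K) ((1 - 'X * gser 1 K) ^+ d).
Proof.
set e := 1 - 'X * gser 1 K.
have He : eqm K.+1 (e ^+ d)^`() ((- (d%:R : rat))%:P * e ^+ d).
  rewrite deriv_exp.
  apply: (@eqm_trans _ _ ((- e) * e ^+ d.-1 *+ d)).
    by apply: eqmMn; apply: eqmM => //; apply: e_deriv.
  apply: eqm_eq; case: d => [|d]; first by rewrite mulr0n polyCN polyC0 oppr0 mul0r.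
  by rewrite -mulr_natr polyCN rmorph_nat /= exprS; ring.
move=> i Hi.
rewrite coef_ex // (@ode (e ^+ d) (- (d%:R)) K.+1) //.
- by move=> j Hj; rewrite He // coefCM.
- by rewrite coef0X /e coef_ex // expr0 fact0 divr1 expr1n.
Qed.

Lemma deriv_one : (1 : {poly rat})^`() = 0.
Proof. by rewrite -polyC1 derivC. Qed.

Definition TT K := toddser K.
Definition gg K := gser 1 K.
Definition ee K : {poly rat} := 1 - 'X * gser 1 K.
Definition FF K j m := (TT K ^+ j.+1 * ee K ^+ m)`_j.
Definition GG (j m : nat) : rat := if m == 0%N then 1 else (-1)^+j * ('C(m.-1, j))%:R.

Lemma T0 K : (TT K)`_0 = 1.
Proof. by have := toddser_inv K 0 erefl; rewrite coef0M gser0 mulr1 coef1. Qed.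
Lemma e0 K : (ee K)`_0 = 1.
Proof. by rewrite /ee coef_ex // expr0 fact0 divr1. Qed.
Lemma FF0 K m : FF K 0 m = 1.
Proof. by rewrite /FF coef0M !coef0X T0 e0 !expr1n mulr1. Qed.

Lemma FF_rec K i m : (i < K)%N -> FF K i.+1 m - FF K i.+1 m.+1 = FF K i m.
Proof.
move=> HiK; rewrite /FF -coefB.
have -> : TT K ^+ i.+2 * ee K ^+ m - TT K ^+ i.+2 * ee K ^+ m.+1
   = 'X * ((TT K * gg K) * (TT K ^+ i.+1 * ee K ^+ m)).
  by rewrite /ee /gg !exprS; ring.
rewrite coefXM /=.
have := @eqmM K.+1 _ _ _ (TT K ^+ i.+1 * ee K ^+ m) (toddser_inv K) (eqm_refl _ _).
move=> H; have H2 := @eqm_trans _ _ _ _ H (@eqm_eq _ _ _ (mul1r _)); rewrite H2 //; lia.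
Qed.

Lemma FF1 K j : (0 < j)%N -> (j <= K)%N -> FF K j 1 = 0.
Proof.
move=> Hj0 HjK.
set T := TT K; set g := gg K; set e := ee K.
have D1 : eqm K.+1 (g + 'X * g^`()) e.
  have -> : g + 'X * g^`() = - e^`().
    by rewrite /e /ee derivB derivM derivX deriv_one /g /gg; ring.
  by rewrite -[e in eqm _ _ e]opprK; apply: eqmN; apply: e_deriv.
have D3 : eqm K.+1 ('X * (T^`() * g + T * g^`())) 0.
  rewrite -(mulr0 'X); apply: eqm_X.
  have := eqm_deriv (toddser_inv K); rewrite derivM deriv_one; exact.
have Hinv : eqm K.+1 (T * g) 1 := toddser_inv K.
have D4 : eqm K.+1 ('X * T^`() - T) (- (T ^+ 2 * e)).
  have HgZ : eqm K.+1 (g * ('X * T^`() - T)) (- 1 - 'X * T * g^`()).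
    have -> : g * ('X * T^`() - T) =
       'X * (T^`() * g + T * g^`()) - 'X * T * g^`() - T * g by ring.
    have -> : - 1 - 'X * T * g^`() = 0 - 'X * T * g^`() - 1 by ring.
    by apply: eqmB => //; apply: eqmB.
  have HgW : eqm K.+1 (g * (- (T ^+ 2 * e))) (- 1 - 'X * T * g^`()).
    apply: (@eqm_trans _ _ (- ((T * g) * (T * g) + (T * g) * ('X * T * g^`())))).
      have -> : g * - (T ^+ 2 * e) = - ((T * T * g) * e) by ring.
      have -> : (T * g) * (T * g) + (T * g) * ('X * T * g^`()) =
                (T * T * g) * (g + 'X * g^`()) by ring.
      by apply: eqmN; apply: eqmM => //; apply: eqm_sym.
    have -> : - 1 - 'X * T * g^`() = - (1 * 1 + 1 * ('X * T * g^`())) by ring.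
    by apply: eqmN; apply: eqmD; apply: eqmM.
  apply: (@eqm_trans _ _ ((T * g) * ('X * T^`() - T))).
    by rewrite -{1}(mul1r ('X * T^`() - T)); apply: eqmM => //; apply: eqm_sym.
  apply: (@eqm_trans _ _ ((T * g) * (- (T ^+ 2 * e)))); last first.
    by rewrite -{2}(mul1r (- (T ^+ 2 * e))); apply: eqmM.
  rewrite -[(T * g) * (_ - _)]mulrA -[(T * g) * (- _)]mulrA; apply: eqmM => //.
  exact: (eqm_trans HgZ (eqm_sym HgW)).
have D5 : eqm K.+1 ('X * (T ^+ j)^`() - T ^+ j *+ j) (- (T ^+ j.+1 * e) *+ j).
  rewrite deriv_exp.
  case: j Hj0 HjK => [//|j] _ _ /=.
  have -> : 'X * (T^`() * T ^+ j *+ j.+1) - T ^+ j.+1 *+ j.+1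
      = (('X * T^`() - T) * T ^+ j) *+ j.+1 by rewrite exprS; ring.
  have -> : - (T ^+ j.+2 * e) *+ j.+1 = ((- (T ^+ 2 * e)) * T ^+ j) *+ j.+1
    by rewrite !exprS; ring.
  by apply: eqmMn; apply: eqmM.
have := D5 j; rewrite ltnS => /(_ HjK).
rewrite coefB coefXM coefMn coef_deriv coefMn coefN.
case: j Hj0 HjK {D5} => [//|j] _ HjK /=.
rewrite subrr => /eqP; rewrite eq_sym mulrn_eq0 /= oppr_eq0 => /eqP.
by rewrite /FF expr1.
Qed.

Lemma FF_GG K j m : (j <= K)%N -> FF K j m = GG j m.
Proof.
elim: j m => [|j IH] m HjK.
  by rewrite FF0 /GG; case: m => //= m; rewrite expr0 mul1r bin0.
have Hpos : forall m, (0 < m)%N -> FF K j.+1 m = GG j.+1 m.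
  elim=> [//|[|k] IHk] _; first by rewrite FF1 // /GG /= bin0n mulr0.
  rewrite -[FF K j.+1 k.+2](subKr (FF K j.+1 k.+1)) FF_rec // IHk // IH 1?ltnW //.
  rewrite /GG /= binS natrD exprS; ring.
case: m => [|m]; last exact: Hpos.
rewrite -[FF K j.+1 0](subrK (FF K j.+1 1)) FF_rec // IH 1?ltnW // FF1 //.
Qed.

Lemma coef_sign c (p : {poly rat}) i : ((-1) ^+ c * p)`_i = (-1) ^+ c * p`_i.
Proof.
elim: c => [|c IH]; first by rewrite !expr0 !mul1r.
by rewrite !exprS -!mulrA !mulN1r coefN IH.
Qed.

Lemma prod_expand r (d : 'I_r -> nat) (e : {poly rat}) :
  \prod_(i < r) (1 - e ^+ d i) =
  \sum_(J : {set 'I_r}) (-1) ^+ #|J| * e ^+ (\sum_(i in J) d i).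
Proof.
under eq_bigr do rewrite addrC.
rewrite bigA_distr; apply: eq_bigr => J _.
by rewrite -big_mkcond /= prodrN prodrXr.
Qed.

Lemma sum_eval r (d : 'I_r -> nat) N :
  (0 < r)%N ->
  (forall i, (1 < d i)%N) ->
  (N.+1 < \sum_(i < r) d i)%N ->
  (forall j, (\sum_(i < r) d i <= N + d j)%N) ->
  \sum_(J : {set 'I_r}) (-1) ^+ #|J| * GG N (\sum_(i in J) d i) =
  1 + (-1) ^+ r * ((-1) ^+ N * ('C((\sum_(i < r) d i).-1, N))%:R).
Proof.
move=> Hr Hd HD1 HD2.
have HT0 : [set: 'I_r] != set0.
  by apply/set0Pn; exists (Ordinal Hr); rewrite in_setT.
rewrite (bigD1 set0) //= (bigD1 [set: 'I_r]) /=; last exact: HT0.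
rewrite [X in _ + (_ + X) = _]big1; last first.
  move=> J /andP [HJ0 HJT].
  have Hpos : (0 < \sum_(i in J) d i)%N.
    have /set0Pn [i Hi] := HJ0.
    rewrite (bigD1 i) //=; have := Hd i; lia.
  have /existsP [j Hj] : [exists j, j \notin J].
    apply: contraR HJT => /existsPn Hall; apply/eqP/setP => i.
    by rewrite in_setT; move: (Hall i); rewrite negbK.
  have Hle : (\sum_(i in J) d i + d j <= \sum_(i < r) d i)%N.
    rewrite [X in (_ <= X)%N](bigD1 j) //= addnC leq_add2l big_mkcond /= [X in (_ <= X)%N]big_mkcond /=.
    apply: leq_sum => i _; case: ifP => // HiJ.
    by case: eqP => // Hij; move: Hj; rewrite -Hij HiJ.
  rewrite /GG; case: eqP => [H0|_]; first by rewrite H0 in Hpos.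
  rewrite bin_small ?mulr0 //; move: Hpos Hle; case: (\sum_(i in J) d i) => // s _ Hle /=; have := HD2 j; lia.

rewrite addr0.
  rewrite cards0 expr0 mul1r /GG /= cardsT card_ord.
have -> : (\sum_(i in [set: 'I_r]) d i)%N = (\sum_(i < r) d i)%N.
  by apply: eq_bigl => i; rewrite in_setT.
rewrite big_set0 /=; by move: HD1; case: (\sum_(i < r) d i).
Qed.

Theorem lemma3p3 (n r : nat) (d : 'I_r -> nat) :
  (1 < r)%N ->
  (forall i, (1 < d i)%N) ->
  c1_CI n r d < 0 ->
  (forall j : 'I_r, 0 <= c1_hat n r d j) ->
  ((n + r)%:R : rat) <= (-1) ^+ n * Todd_CI n r d.
Proof.
move=> Hr Hd Hc1 Hhat.
set S := (\sum_(i < r) d i)%N.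
have HD1 : ((n + r).+1 < S)%N by move: Hc1; rewrite /c1_CI -/S; lia.
have HD2 : forall j, (S <= n + r + d j)%N.
  by move=> j; move: (Hhat j); rewrite /c1_hat -/S; lia.
set N := (n + r)%N.
have E1 : Todd_CI n r d =
    (toddser n ^+ (n + r + 1) * \prod_(i < r) gser (d i)%:R n)`_n.
  rewrite /Todd_CI scaler_prod -scalerAr coefZ mulrA prodfV mulfV ?mul1r //.
  by apply/prodf_neq0 => i _; rewrite pnatr_eq0 -lt0n; apply: ltnW (Hd i).
have E2 : (toddser n ^+ (n + r + 1) * \prod_(i < r) gser (d i)%:R n)`_n =
    (TT N ^+ N.+1 * \prod_(i < r) gser (d i)%:R N)`_n.
  rewrite addn1; apply: (@eqmM n.+1).
  - by apply: eqmX; apply: todd_trunc; rewrite /N leq_addr.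
  - by apply: eqm_prod => i; apply: eqm_gser; rewrite /N leq_addr.
  - by [].
have E3 : (TT N ^+ N.+1 * \prod_(i < r) gser (d i)%:R N)`_n =
    (TT N ^+ N.+1 * \prod_(i < r) ('X * gser (d i)%:R N))`_N.
  rewrite big_split /= prodr_const card_ord.
  have -> : TT N ^+ N.+1 * ('X ^+ r * \prod_(i < r) gser (d i)%:R N) =
            'X^r * (TT N ^+ N.+1 * \prod_(i < r) gser (d i)%:R N) by ring.
  by rewrite coefXnM /N ltnNge leq_addl /= addnK.
have E4 : (TT N ^+ N.+1 * \prod_(i < r) ('X * gser (d i)%:R N))`_N =
    (TT N ^+ N.+1 * \prod_(i < r) (1 - ee N ^+ d i))`_N.
  apply: (@eqmM N.+1) => //; apply: eqm_prod => i.
  have -> : 'X * gser (d i)%:R N = 1 - (1 - 'X * gser (d i)%:R N) by ring.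
  apply: eqmB => //; exact: (@eqm_le N.+2 N.+1 _ _ (leqnSn _) (exd (d i) N)).
rewrite E1 E2 E3 E4 prod_expand mulr_sumr coef_sum.
have E5 : forall J : {set 'I_r},
    (TT N ^+ N.+1 * ((-1) ^+ #|J| * ee N ^+ (\sum_(i in J) d i)))`_N =
    (-1) ^+ #|J| * GG N (\sum_(i in J) d i).
  move=> J; rewrite mulrCA coef_sign; congr (_ * _).
  by rewrite -(@FF_GG N N)...
rewrite (eq_bigr _ (fun J _ => E5 J)) sum_eval //; last first.
- by apply: ltnW.
rewrite mulrDr mulr1 !mulrA -!exprD.
have -> : (n + r + N = N + N)%N by [].
rewrite addnn -mul2n exprM sqrrN !expr1n mul1r -/S.
have HC : ((N.+1)%:R : rat) <= ('C(S.-1, N))%:R.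
  rewrite ler_nat -[X in (X <= _)%N]binSn; apply: leq_bin2l; lia.
rewrite -signr_odd; case: (odd n); rewrite ?expr1 ?expr0.
- by rewrite -natr1 in HC; lra.
- by rewrite -natr1 in HC; lra.
Qed.
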